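(* In every non abelian dihedral group (i.e. every $\mathbb{D}_{2n}$ with $n\in\{3,4,\dots\}\cup\{\infty\}$) the following sentences are true: \begin{itemize} \item[$(P_1)$] $\forall x \forall y\, \big( (x^2 \neq 1 \wedge y^2 \neq 1)\Rightarrow xy=yx\big)$; \item[$(P_2)$] $\forall x \forall y \forall z\, \big((x \neq 1 \wedge x^2 = 1 \wedge y^2 \neq 1 \wedge xz \neq zx )\Rightarrow x^{-1}yx=y^{-1}\big)$; \item[$(P_3)$] $\forall x \forall y \forall z \forall t \forall u\, \big((xz \neq zx \wedge yt \neq ty \wedge x^2=1 \wedge y^2=1 \wedge (xy)^2=1)\Rightarrow (xy)u=u(xy)\big)$; \item[$(P_4)$] $\forall x \forall y \forall z \forall t\, \big((x \neq 1 \wedge x^2 = 1 \wedge y \neq 1 \wedge y^2 =1 \wedge z^2 \neq 1 \wedge t^2 \neq 1 \wedge xz=zx \wedge yt=ty) \Rightarrow x=y\big)$. \end{itemize}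
   Context: For $n\in\{1,2,\dots\}\cup\{\infty\}$, $\mathbb{D}_{2n}=\langle a,b \mid a^2=b^n=1,\ a^{-1}ba=b^{-1}\rangle$ (the relation $b^n=1$ omitted when $n=\infty$); a group is dihedral if it is isomorphic to some $\mathbb{D}_{2n}$, and it is non abelian exactly when $n\ge 3$ or $n=\infty$. *)

(* Defs.v *)
Record Group : Type := MkGroup {
  carrier :> Type;
  gmul : carrier -> carrier -> carrier;
  ginv : carrier -> carrier;
  gone : carrier;
  gmulA : forall x y z, gmul x (gmul y z) = gmul (gmul x y) z;
  gmul1l : forall x, gmul gone x = x;
  gmul1r : forall x, gmul x gone = x;
  gmulVl : forall x, gmul (ginv x) x = gone;
  gmulVr : forall x, gmul x (ginv x) = gone
}.

Arguments gmul {g} _ _.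
Arguments ginv {g} _.
Arguments gone {g}.

Fixpoint gpow {G : Group} (x : G) (m : nat) : G :=
  match m with
  | O => gone
  | S k => gmul x (gpow x k)
  end.

(* n = Some m : D_{2m};  n = None : D_{2 infinity} (relation b^n = 1 omitted) *)
Definition dih_rels {G : Group} (n : option nat) (a b : G) : Prop :=
  gmul a a = gone /\
  (match n with Some m => gpow b m = gone | None => True end) /\
  gmul (gmul (ginv a) b) a = ginv b.

Inductive generated {G : Group} (a b : G) : G -> Prop :=
  | gen_one : generated a b gone
  | gen_a : generated a b a
  | gen_b : generated a b b
  | gen_inv : forall x, generated a b x -> generated a b (ginv x)
  | gen_mul : forall x y, generated a b x -> generated a b y ->
      generated a b (gmul x y).

Definition is_hom {G H : Group} (f : G -> H) : Prop :=
  forall x y, f (gmul x y) = gmul (f x) (f y).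

(* G is isomorphic to the group presented by <a, b | dih_rels n a b>:
   G is generated by elements a, b satisfying the relations, and these
   satisfy the universal property of the presentation. *)
Definition is_dihedral (G : Group) (n : option nat) : Prop :=
  exists a b : G,
    dih_rels n a b /\
    (forall x : G, generated a b x) /\
    (forall (H : Group) (a' b' : H), dih_rels n a' b' ->
       exists f : G -> H, is_hom f /\ f a = a' /\ f b = b').

Definition dih_nonabelian_index (n : option nat) : Prop :=
  match n with Some m => 3 <= m | None => True end.

(* Main.v *)
Require Import Defs.
From Stdlib Require Import ZArith Lia Setoid Morphisms Eqdep_dec.
Open Scope Z_scope.


Arguments gmulA {g} _ _ _. Arguments gmul1l {g} _. Arguments gmul1r {g} _. Arguments gmulVl {g} _. Arguments gmulVr {g} _.

Lemma inv_uniq {G : Group} (x y : G) : gmul x y = gone -> ginv x = y.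
Proof. intro H. rewrite <- (gmul1r (ginv x)), <- H, gmulA, gmulVl, gmul1l. reflexivity. Qed.
Lemma ginv_ginv {G : Group} (x : G) : ginv (ginv x) = x.
Proof. apply inv_uniq. apply gmulVl. Qed.
Lemma ginv_one {G : Group} : ginv (@gone G) = gone.
Proof. apply inv_uniq. apply gmul1l. Qed.
Lemma ginv_mul {G : Group} (x y : G) : ginv (gmul x y) = gmul (ginv y) (ginv x).
Proof. apply inv_uniq. rewrite <- gmulA, (gmulA y), gmulVr, gmul1l, gmulVr. reflexivity. Qed.
Lemma mulKl {G : Group} (x y : G) : gmul x (gmul (ginv x) y) = y.
Proof. rewrite gmulA, gmulVr, gmul1l. reflexivity. Qed.
Lemma mulVKl {G : Group} (x y : G) : gmul (ginv x) (gmul x y) = y.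
Proof. rewrite gmulA, gmulVl, gmul1l. reflexivity. Qed.

Definition zpow {G : Group} (b : G) (k : Z) : G :=
  if Z.leb 0 k then gpow b (Z.to_nat k) else gpow (ginv b) (Z.to_nat (- k)).

Lemma zpow_nonneg {G : Group} (b : G) k : 0 <= k -> zpow b k = gpow b (Z.to_nat k).
Proof. intro H. unfold zpow. destruct (Z.leb_spec 0 k); [reflexivity | lia]. Qed.
Lemma zpow_nonpos {G : Group} (b : G) k : k <= 0 -> zpow b k = gpow (ginv b) (Z.to_nat (- k)).
Proof.
  intro H. unfold zpow. destruct (Z.leb_spec 0 k); [|reflexivity].
  assert (k = 0) by lia. subst. reflexivity.
Qed.

Lemma zpow_succ {G : Group} (b : G) k : gmul b (zpow b k) = zpow b (k + 1).
Proof.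
  destruct (Z.le_gt_cases 0 k).
  - rewrite !zpow_nonneg by lia. replace (Z.to_nat (k+1)) with (S (Z.to_nat k)) by lia. reflexivity.
  - rewrite !zpow_nonpos by lia. replace (Z.to_nat (-k)) with (S (Z.to_nat (-(k+1)))) by lia.
    simpl. apply mulKl.
Qed.
Lemma zpow_pred {G : Group} (b : G) k : gmul (ginv b) (zpow b k) = zpow b (k - 1).
Proof.
  destruct (Z.le_gt_cases k 0).
  - rewrite !zpow_nonpos by lia. replace (Z.to_nat (-(k-1))) with (S (Z.to_nat (-k))) by lia. reflexivity.
  - rewrite !zpow_nonneg by lia. replace (Z.to_nat k) with (S (Z.to_nat (k-1))) by lia.
    simpl. apply mulVKl.
Qed.

Lemma zpow_addnat {G : Group} (b : G) k (n : nat) : zpow b (k + Z.of_nat n) = gmul (gpow b n) (zpow b k).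
Proof.
  induction n.
  - simpl. rewrite Z.add_0_r, gmul1l. reflexivity.
  - replace (k + Z.of_nat (S n)) with ((k + Z.of_nat n) + 1) by lia.
    rewrite <- zpow_succ, IHn. simpl. apply gmulA.
Qed.

Lemma zpow_period {G : Group} (b : G) (N : nat) k (q : Z) : gpow b N = gone ->
  zpow b (k + q * Z.of_nat N) = zpow b k.
Proof.
  intro HN.
  assert (P1 : forall k, zpow b (k + Z.of_nat N) = zpow b k).
  { intro k0. rewrite zpow_addnat, HN, gmul1l. reflexivity. }
  assert (Pq : forall (m : nat) k, zpow b (k + Z.of_nat m * Z.of_nat N) = zpow b k).
  { induction m; intro k0.
    - rewrite Z.mul_0_l, Z.add_0_r. reflexivity.
    - replace (k0 + Z.of_nat (S m) * Z.of_nat N) with ((k0 + Z.of_nat m * Z.of_nat N) + Z.of_nat N) by lia.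
      rewrite P1. apply IHm. }
  destruct (Z.le_gt_cases 0 q).
  - replace q with (Z.of_nat (Z.to_nat q)) by lia. apply Pq.
  - rewrite <- (Pq (Z.to_nat (-q)) (k + q * Z.of_nat N)). f_equal. lia.
Qed.


Lemma hom_one {G H : Group} (f : G -> H) : is_hom f -> f gone = gone.
Proof.
  intro Hf. assert (E : f gone = gmul (f gone) (f gone)) by (rewrite <- Hf, gmul1l; reflexivity).
  rewrite <- (mulVKl (f gone) (f gone)), <- E, gmulVl. reflexivity.
Qed.
Lemma hom_inv {G H : Group} (f : G -> H) (x : G) : is_hom f -> f (ginv x) = ginv (f x).
Proof.
  intro Hf. symmetry. apply inv_uniq. rewrite <- Hf, gmulVr. apply hom_one; auto.
Qed.
Lemma hom_gpow {G H : Group} (f : G -> H) (x : G) n : is_hom f -> f (gpow x n) = gpow (f x) n.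
Proof. intro Hf. induction n; simpl. apply hom_one; auto. rewrite Hf, IHn. reflexivity. Qed.
Lemma hom_zpow {G H : Group} (f : G -> H) (x : G) k : is_hom f -> f (zpow x k) = zpow (f x) k.
Proof. intro Hf. unfold zpow. destruct (Z.leb 0 k); rewrite hom_gpow, ?hom_inv; auto. Qed.



Inductive cg (M a b : Z) : Prop := mkcg : a mod M = b mod M -> cg M a b.
Lemma cg_equiv M : Equivalence (cg M).
Proof. split; red; intros; repeat match goal with H : cg _ _ _ |- _ => destruct H end; constructor; congruence. Qed.
Add Parametric Relation (M : Z) : Z (cg M)
  reflexivity proved by (@Equivalence_Reflexive _ _ (cg_equiv M))
  symmetry proved by (@Equivalence_Symmetric _ _ (cg_equiv M))
  transitivity proved by (@Equivalence_Transitive _ _ (cg_equiv M)) as cg_rel.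
Add Parametric Morphism M : Z.add with signature cg M ==> cg M ==> cg M as cg_add.
Proof. intros ? ? [H] ? ? [H0]; constructor. rewrite Zplus_mod, H, H0, <- Zplus_mod. reflexivity. Qed.
Add Parametric Morphism M : Z.sub with signature cg M ==> cg M ==> cg M as cg_sub.
Proof. intros ? ? [H] ? ? [H0]; constructor. rewrite Zminus_mod, H, H0, <- Zminus_mod. reflexivity. Qed.
Add Parametric Morphism M : Z.opp with signature cg M ==> cg M as cg_opp.
Proof. intros x y [H]. constructor. rewrite <- (Z.sub_0_l x), <- (Z.sub_0_l y), Zminus_mod, H, <- Zminus_mod. reflexivity. Qed.
Add Parametric Morphism M : Z.mul with signature cg M ==> cg M ==> cg M as cg_mul.
Proof. intros ? ? [H] ? ? [H0]; constructor. rewrite Zmult_mod, H, H0, <- Zmult_mod. reflexivity. Qed.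
Lemma modcg M x : cg M (x mod M) x.
Proof. constructor. apply Zmod_mod. Qed.

Record DE (M : Z) := { ds : bool; dk : Z; dp : dk mod M = dk }.
Arguments ds {M}. Arguments dk {M}.

Lemma DE_eq M (x y : DE M) : ds x = ds y -> dk x = dk y -> x = y.
Proof.
  destruct x as [s k p], y as [t j q]; simpl; intros -> ->.
  f_equal. apply UIP_dec, Z.eq_dec.
Qed.

Definition mk M (s : bool) (k : Z) : DE M := Build_DE M s (k mod M) (Zmod_mod k M).
Definition sg (s : bool) (k : Z) := if s then 0 - k else k.
Definition dmul M (x y : DE M) : DE M := mk M (xorb (ds x) (ds y)) (sg (ds y) (dk x) + dk y).
Definition dinv M (x : DE M) : DE M := mk M (ds x) (if ds x then dk x else 0 - dk x).
Definition done M : DE M := mk M false 0.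

Lemma mk_eq M s t k j : mk M s k = mk M t j <-> s = t /\ cg M k j.
Proof.
  split.
  - intro E. split. exact (f_equal (@ds M) E). constructor. exact (f_equal (@dk M) E).
  - intros [-> [E]]. apply DE_eq; simpl; auto.
Qed.
Lemma DE_mk M (x : DE M) : x = mk M (ds x) (dk x).
Proof. apply DE_eq; simpl; auto. symmetry; apply dp. Qed.

Lemma mk_mul M s t k j : dmul M (mk M s k) (mk M t j) = mk M (xorb s t) (sg t k + j).
Proof.
  unfold dmul; simpl. apply mk_eq; split; auto.
  destruct t; simpl; rewrite !modcg; reflexivity.
Qed.
Lemma mk_inv M s k : dinv M (mk M s k) = mk M s (if s then k else 0 - k).
Proof. unfold dinv; simpl. apply mk_eq; split; auto. destruct s; rewrite !modcg; reflexivity. Qed.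

Ltac mkify M := repeat match goal with
  | x : DE M |- _ => rewrite (DE_mk M x); generalize (ds x) (dk x); clear x; intros ? ?
  end.

Lemma cg_of_eq M a b : a = b -> cg M a b.
Proof. intros ->; reflexivity. Qed.

Definition HG (M : Z) : Group.
Proof.
  refine (MkGroup (DE M) (dmul M) (dinv M) (done M) _ _ _ _ _); intros; unfold done; mkify M;
  rewrite ?mk_mul, ?mk_inv, ?mk_mul; apply mk_eq;
  (split; [ repeat match goal with b : bool |- _ => destruct b end; reflexivity
          | repeat match goal with b : bool |- _ => destruct b end; apply cg_of_eq; simpl; ring ]).
Defined.


Lemma cg_shift M a b d : cg M d 0 -> a = b + d -> cg M a b.
Proof. intros H ->. rewrite H. apply cg_of_eq; ring. Qed.
Lemma cg_diff M A B C : cg M A B -> C = A - B -> cg M C 0.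
Proof. intros H ->. rewrite H. apply cg_of_eq; ring. Qed.

Lemma half_unique M k j : 0 <= M -> cg M (k+k) 0 -> ~cg M k 0 -> cg M (j+j) 0 -> ~ cg M j 0 -> cg M k j.
Proof.
  intros HM [H1] H2 [H3] H4.
  assert (N2 : k mod M <> 0). { intro E; apply H2; constructor; rewrite E, Zmod_0_l; reflexivity. }
  assert (N4 : j mod M <> 0). { intro E; apply H4; constructor; rewrite E, Zmod_0_l; reflexivity. }
  rewrite Zmod_0_l in H1, H3.
  destruct (Z.eq_dec M 0) as [E|E].
  { subst. rewrite Zmod_0_r in *. lia. }
  constructor.
  assert (B1 := Z.mod_pos_bound k M ltac:(lia)).
  assert (B2 := Z.mod_pos_bound j M ltac:(lia)).
  rewrite Zplus_mod in H1, H3.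
  set (k' := k mod M) in *. set (j' := j mod M) in *.
  assert (D1 := Z_div_mod_eq_full (k' + k') M).
  assert (D2 := Z_div_mod_eq_full (j' + j') M).
  rewrite H1 in D1. rewrite H3 in D2.
  set (q := (k'+k')/M) in *. set (r := (j'+j')/M) in *.
  assert (q = 1) by nia. assert (r = 1) by nia. subst q r. lia.
Qed.

Ltac mkify' M := repeat match goal with
  | x : carrier (HG M) |- _ => change (carrier (HG M)) with (DE M) in x
  end; mkify M.

Ltac mkg M x s k := change (carrier (HG M)) with (DE M) in x;
  rewrite (DE_mk M x); generalize (ds x) (dk x); clear x; intros s k.

Ltac contr H := exfalso; apply H; apply mk_eq; split; [reflexivity| apply cg_of_eq; simpl; ring].

Lemma rot_central M k u : cg M (k+k) 0 -> dmul M (mk M false k) u = dmul M u (mk M false k).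
Proof.
  intro H. mkify M. rewrite !mk_mul. apply mk_eq. destruct b; split; auto; simpl.
  symmetry; apply cg_shift with (k+k); auto. ring. apply cg_of_eq; ring.
Qed.

Lemma eq_cg M s t k j : mk M s k = mk M t j -> cg M k j.
Proof. intro E; apply mk_eq in E; tauto. Qed.

Lemma HP1 M (x y : HG M) : gmul x x <> gone -> gmul y y <> gone -> gmul x y = gmul y x.
Proof.
  simpl. unfold done. mkg M x s1 k1. mkg M y s2 k2. rewrite !mk_mul. intros Hx Hy.
  destruct s1; [contr Hx|]. destruct s2; [contr Hy|].
  apply mk_eq; split; auto; apply cg_of_eq; simpl; ring.
Qed.

Lemma HP2 M (x y z : HG M) : x <> gone -> gmul x x = gone -> gmul y y <> gone ->
     gmul x z <> gmul z x -> gmul (gmul (ginv x) y) x = ginv y.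
Proof.
  simpl. unfold done. mkg M x s1 k1. mkg M y s2 k2. mkg M z s3 k3.
  rewrite ?mk_mul, ?mk_inv, ?mk_mul. intros Hx1 Hx2 Hy Hz.
  destruct s2; [contr Hy|].
  destruct s1; [apply mk_eq; split; auto; apply cg_of_eq; simpl; ring|].
  apply eq_cg in Hx2. simpl in Hx2.
  exfalso; apply Hz. rewrite <- !mk_mul. apply rot_central; auto.
Qed.

Lemma HP3 M (x y z t u : HG M) : gmul x z <> gmul z x -> gmul y t <> gmul t y ->
     gmul x x = gone -> gmul y y = gone -> gmul (gmul x y) (gmul x y) = gone ->
     gmul (gmul x y) u = gmul u (gmul x y).
Proof.
  simpl. unfold done. mkg M x s1 k1. mkg M y s2 k2. mkg M z s3 k3. mkg M t s4 k4.
  rewrite ?mk_mul. intros Hz Ht Hx Hy Hxy.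
  destruct s1.
  2:{ apply eq_cg in Hx. simpl in Hx. exfalso; apply Hz. rewrite <- !mk_mul. apply rot_central; auto. }
  destruct s2.
  2:{ apply eq_cg in Hy. simpl in Hy. exfalso; apply Ht. rewrite <- !mk_mul. apply rot_central; auto. }
  cbn [xorb sg] in *. apply eq_cg in Hxy.
  apply rot_central; auto.
Qed.

Lemma HP4 M (x y z t : HG M) : 0 <= M -> x <> gone -> gmul x x = gone -> y <> gone ->
     gmul y y = gone -> gmul z z <> gone -> gmul t t <> gone ->
     gmul x z = gmul z x -> gmul y t = gmul t y -> x = y.
Proof.
  intro HM. simpl. unfold done. mkg M x s1 k1. mkg M y s2 k2. mkg M z s3 z1. mkg M t s4 z2.
  rewrite ?mk_mul. intros Hx1 Hx2 Hy1 Hy2 Hz Ht Hxz Hyt.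
  destruct s3; [contr Hz|]. destruct s4; [contr Ht|].
  assert (Nz : ~ cg M (z1 + z1) 0) by (intro E; apply Hz; apply mk_eq; split; auto; simpl; exact E).
  assert (Nt : ~ cg M (z2 + z2) 0) by (intro E; apply Ht; apply mk_eq; split; auto; simpl; exact E).
  destruct s1. { apply eq_cg in Hxz. exfalso; apply Nz. eapply cg_diff. apply Hxz. simpl; ring. }
  destruct s2. { apply eq_cg in Hyt. exfalso; apply Nt. eapply cg_diff. apply Hyt. simpl; ring. }
  apply eq_cg in Hx2. apply eq_cg in Hy2. simpl in *.
  apply mk_eq; split; auto. apply half_unique; auto.
  intro E; apply Hx1; apply mk_eq; auto.
  intro E; apply Hy1; apply mk_eq; auto.
Qed.


Definition apow {G : Group} (a : G) (s : bool) : G := if s then a else gone.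
Definition NF {G : Group} (a b : G) (y : G) := exists s k, y = gmul (apow a s) (zpow b k).

Lemma normal_form (G : Group) (a b : G) : gmul a a = gone -> gmul (gmul (ginv a) b) a = ginv b ->
  forall x, generated a b x -> NF a b x.
Proof.
  intros Ha Hr.
  assert (Ia : ginv a = a) by (apply inv_uniq; exact Ha).
  rewrite Ia in Hr.
  assert (BA : gmul b a = gmul a (ginv b)).
  { rewrite <- Hr. rewrite !gmulA, Ha, gmul1l. reflexivity. }
  assert (BIA : gmul (ginv b) a = gmul a b).
  { rewrite <- Hr. rewrite <- !gmulA, Ha, gmul1r. reflexivity. }
  assert (La : forall y, NF a b y -> NF a b (gmul a y)).
  { intros y (s & k & ->). destruct s; simpl.
    - exists false, k. simpl. rewrite gmulA, Ha. reflexivity.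
    - exists true, k. simpl. rewrite gmul1l. reflexivity. }
  assert (Lb : forall y, NF a b y -> NF a b (gmul b y)).
  { intros y (s & k & ->). destruct s; simpl.
    - exists true, (k - 1). simpl. rewrite gmulA, BA, <- gmulA, zpow_pred. reflexivity.
    - exists false, (k + 1). simpl. rewrite !gmul1l, zpow_succ. reflexivity. }
  assert (Lbi : forall y, NF a b y -> NF a b (gmul (ginv b) y)).
  { intros y (s & k & ->). destruct s; simpl.
    - exists true, (k + 1). simpl. rewrite gmulA, BIA, <- gmulA, zpow_succ. reflexivity.
    - exists false, (k - 1). simpl. rewrite !gmul1l, zpow_pred. reflexivity. }
  assert (T : forall x, generated a b x -> forall y, NF a b y -> NF a b (gmul x y) /\ NF a b (gmul (ginv x) y)).
  { induction 1; intros w Hy.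
    - rewrite ginv_one, gmul1l. auto.
    - rewrite Ia. auto.
    - auto.
    - rewrite ginv_ginv. destruct (IHgenerated w Hy). auto.
    - rewrite ginv_mul, <- !gmulA. split.
      + apply IHgenerated1, IHgenerated2, Hy.
      + apply IHgenerated2, IHgenerated1, Hy. }
  intros x Hx. rewrite <- (gmul1r x). apply T; auto.
  exists false, 0. simpl. rewrite gmul1l. reflexivity.
Qed.


Lemma gpow_b' M (n : nat) : @gpow (HG M) (mk M false 1) n = mk M false (Z.of_nat n).
Proof.
  induction n; [reflexivity|].
  change (dmul M (mk M false 1) (@gpow (HG M) (mk M false 1) n) = mk M false (Z.of_nat (S n))).
  rewrite IHn.
  rewrite mk_mul. apply mk_eq; split; auto. apply cg_of_eq; cbn [sg]; lia.
Qed.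
Lemma gpow_bi M (n : nat) : @gpow (HG M) (@ginv (HG M) (mk M false 1)) n = mk M false (- Z.of_nat n).
Proof.
  induction n; [reflexivity|].
  change (dmul M (dinv M (mk M false 1)) (@gpow (HG M) (@ginv (HG M) (mk M false 1)) n) = mk M false (- Z.of_nat (S n))).
  rewrite IHn.
  rewrite mk_inv, mk_mul. apply mk_eq; split; auto. apply cg_of_eq; cbn [sg]; lia.
Qed.
Lemma zpow_b' M k : @zpow (HG M) (mk M false 1) k = mk M false k.
Proof.
  destruct (Z.le_gt_cases 0 k).
  - rewrite zpow_nonneg by lia. rewrite gpow_b'. f_equal. lia.
  - rewrite zpow_nonpos by lia. rewrite gpow_bi. f_equal. lia.
Qed.

Theorem lemma4p3 (G : Group) (n : option nat) :
  dih_nonabelian_index n -> is_dihedral G n ->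
  (* P1 *)
  (forall x y : G, gmul x x <> gone -> gmul y y <> gone ->
     gmul x y = gmul y x) /\
  (* P2 *)
  (forall x y z : G, x <> gone -> gmul x x = gone -> gmul y y <> gone ->
     gmul x z <> gmul z x ->
     gmul (gmul (ginv x) y) x = ginv y) /\
  (* P3 *)
  (forall x y z t u : G, gmul x z <> gmul z x -> gmul y t <> gmul t y ->
     gmul x x = gone -> gmul y y = gone -> gmul (gmul x y) (gmul x y) = gone ->
     gmul (gmul x y) u = gmul u (gmul x y)) /\
  (* P4 *)
  (forall x y z t : G, x <> gone -> gmul x x = gone -> y <> gone ->
     gmul y y = gone -> gmul z z <> gone -> gmul t t <> gone ->
     gmul x z = gmul z x -> gmul y t = gmul t y -> x = y).
Proof.
  intros _ (a & b & Hrel & Hgen & Huniv).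
  set (N := match n with Some m => m | None => 0%nat end).
  set (M := Z.of_nat N).
  assert (HM : 0 <= M) by lia.
  assert (Hper : gpow b N = gone).
  { subst N. destruct n; [apply Hrel | reflexivity]. }
  assert (Hrel' : dih_rels n (mk M true 0 : HG M) (mk M false 1)).
  { split; [|split].
    - change (dmul M (mk M true 0) (mk M true 0) = mk M false 0). rewrite mk_mul.
      apply mk_eq; split; auto. apply cg_of_eq; cbn [sg]; lia.
    - destruct n as [m|]; [|exact I]. rewrite gpow_b'. apply mk_eq; split; auto.
      constructor. subst M N. rewrite Z_mod_same_full, Zmod_0_l. reflexivity.
    - change (dmul M (dmul M (dinv M (mk M true 0)) (mk M false 1)) (mk M true 0) = dinv M (mk M false 1)).
      rewrite !mk_inv, !mk_mul. apply mk_eq; split; auto. apply cg_of_eq; cbn [sg]; lia. }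
  destruct (Huniv _ _ _ Hrel') as (f & Hf & fa & fb).
  assert (Fnf : forall s k, f (gmul (apow a s) (zpow b k)) = mk M s k).
  { intros s k. rewrite Hf, hom_zpow, fb, zpow_b' by auto. destruct s; simpl apow.
    - rewrite fa. change (dmul M (mk M true 0) (mk M false k) = mk M true k).
      rewrite mk_mul. apply mk_eq; split; auto. apply cg_of_eq; cbn [sg]; lia.
    - rewrite hom_one by auto. apply gmul1l. }
  assert (finj : forall x y, f x = f y -> x = y).
  { intros x y E.
    destruct (normal_form G a b (proj1 Hrel) (proj2 (proj2 Hrel)) x (Hgen x)) as (s & k & ->).
    destruct (normal_form G a b (proj1 Hrel) (proj2 (proj2 Hrel)) y (Hgen y)) as (t & j & ->).
    rewrite !Fnf in E. apply mk_eq in E. destruct E as [<- [E]].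
    apply Z.cong_iff_ex in E. destruct E as [q E].
    replace k with (j + q * Z.of_nat N) by (subst M; lia).
    rewrite zpow_period; auto. }
  assert (one : f gone = gone) by (apply hom_one; auto).
  split; [|split; [|split]].
  - intros x y H1 H2. apply finj. rewrite !Hf. apply HP1.
    + intro E; apply H1; apply finj; rewrite Hf, E, one; reflexivity.
    + intro E; apply H2; apply finj; rewrite Hf, E, one; reflexivity.
  - intros x y z H1 H2 H3 H4. apply finj. rewrite !Hf, !(hom_inv f) by auto. apply HP2 with (f z).
    + intro E; apply H1; apply finj; rewrite E, one; reflexivity.
    + rewrite <- Hf, H2, one; reflexivity.
    + intro E; apply H3; apply finj; rewrite Hf, E, one; reflexivity.
    + intro E; apply H4; apply finj; rewrite !Hf; exact E.
  - intros x y z t u H1 H2 H3 H4 H5. apply finj. rewrite !Hf. apply HP3 with (f z) (f t).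
    + intro E; apply H1; apply finj; rewrite !Hf; exact E.
    + intro E; apply H2; apply finj; rewrite !Hf; exact E.
    + rewrite <- Hf, H3, one; reflexivity.
    + rewrite <- Hf, H4, one; reflexivity.
    + rewrite <- !Hf, H5, one; reflexivity.
  - intros x y z t H1 H2 H3 H4 H5 H6 H7 H8. apply finj. apply HP4 with (f z) (f t); auto.
    + intro E; apply H1; apply finj; rewrite E, one; reflexivity.
    + rewrite <- Hf, H2, one; reflexivity.
    + intro E; apply H3; apply finj; rewrite E, one; reflexivity.
    + rewrite <- Hf, H4, one; reflexivity.
    + intro E; apply H5; apply finj; rewrite Hf, E, one; reflexivity.
    + intro E; apply H6; apply finj; rewrite Hf, E, one; reflexivity.
    + rewrite <- !Hf, H7; reflexivity.
    + rewrite <- !Hf, H8; reflexivity.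
Qed.
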